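(* Let $(X,\|\cdot\|)$ be a Banach space, $A,B\subset X$ nonempty, let $\phi:A\times\mathbb{R}^+\to\mathbb{R}^+$ have the positive property about $A$, and suppose $A$ is a uniformly convex set about $\phi$. Then the ordered pair $(A,B)$ has the $BUC$ property.
   Context: The metric is $\rho(x,y)=\|x-y\|$; $\mathrm{dist}(A,B)=\inf\{\|a-b\|:a\in A,b\in B\}$; $B(x_0,r)=\{x\in X:\|x-x_0\|<r\}$; $\mathbb{R}^+=(0,\infty)$. A function $\phi:A\times\mathbb{R}^+\to\mathbb{R}^+$ has the positive property about $A$ if for every bounded subset $A'\subset A$ and every $\varepsilon_0>0$ one has $\inf\{\phi(x,\varepsilon):x\in A',\ \varepsilon\ge\varepsilon_0\}>0$. The set $A$ is uniformly convex about $\phi$ if for every $\varepsilon>0$ and all $x,y\in A$ with $\|x-y\|\ge\varepsilon$ one has $\frac{x+y}{2}\in A$ and $B\left(\frac{x+y}{2},\phi\left(\frac{x+y}{2},\varepsilon\right)\right)\subset A$. The ordered pair $(A,B)$ has the bounded $UC$ property ($BUC$) if for all bounded sequences $\{x_n\},\{z_n\}\subset A$ and every sequence $\{y_n\}\subset B$ with $\lim_n\|x_n-y_n\|=\lim_n\|z_n-y_n\|=\mathrm{dist}(A,B)$ one has $\lim_n\|x_n-z_n\|=0$. *)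

(* Defs.v *)
From HB Require Import structures.
From mathcomp Require Import all_boot all_order all_algebra.
From mathcomp Require Import all_classical all_reals all_analysis.
Set Implicit Arguments. Unset Strict Implicit. Unset Printing Implicit Defensive.
Import Order.TTheory GRing.Theory Num.Theory.
Import numFieldNormedType.Exports.
Local Open Scope classical_set_scope.
Local Open Scope ring_scope.

Definition setdist (R : realType) (V : normedModType R) (A B : set V) : R :=
  inf [set `|a - b| | a in A & b in B].

Definition oball (R : realType) (V : normedModType R) (x0 : V) (r : R) : set V :=
  [set x | `|x - x0| < r].

(* phi : A x R^+ -> R^+, modelled as a function V -> R -> R taking positive
   values on A x (0,oo). *)
Definition phi_pos_valued (R : realType) (V : normedModType R) (A : set V)
  (phi : V -> R -> R) : Prop :=
  forall x eps, A x -> 0 < eps -> 0 < phi x eps.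

Definition bounded_set (R : realType) (V : normedModType R) (A' : set V) : Prop :=
  exists M : R, forall x, A' x -> `|x| <= M.

(* positive property about A.  Empty A' is excluded: in the paper inf of the
   empty set is +oo > 0, so that case holds vacuously; mathcomp's inf set0 = 0. *)
Definition positive_property (R : realType) (V : normedModType R) (A : set V)
  (phi : V -> R -> R) : Prop :=
  forall A' : set V, A' `<=` A -> A' !=set0 -> bounded_set A' ->
  forall eps0 : R, 0 < eps0 ->
    0 < inf [set phi x eps | x in A' & eps in [set e | eps0 <= e]].

Definition unif_convex_about (R : realType) (V : normedModType R) (A : set V)
  (phi : V -> R -> R) : Prop :=
  forall eps : R, 0 < eps -> forall x y, A x -> A y -> eps <= `|x - y| ->
    A (2%:R^-1 *: (x + y)) /\
    oball (2%:R^-1 *: (x + y)) (phi (2%:R^-1 *: (x + y)) eps) `<=` A.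

Definition bounded_seq (R : realType) (V : normedModType R) (u : nat -> V) : Prop :=
  exists M : R, forall n, `|u n| <= M.

Definition BUC (R : realType) (V : normedModType R) (A B : set V) : Prop :=
  forall (x z y : nat -> V),
    bounded_seq x -> bounded_seq z ->
    (forall n, A (x n)) -> (forall n, A (z n)) -> (forall n, B (y n)) ->
    (fun n => `|x n - y n|) @ \oo --> setdist A B ->
    (fun n => `|z n - y n|) @ \oo --> setdist A B ->
    (fun n => `|x n - z n|) @ \oo --> (0 : R).

(* Main.v *)
Require Import Defs.
From HB Require Import structures.
From mathcomp Require Import all_boot all_order all_algebra.
From mathcomp Require Import all_classical all_reals all_analysis.
Import Order.TTheory GRing.Theory Num.Theory.
Import numFieldNormedType.Exports.
Local Open Scope classical_set_scope.
Local Open Scope ring_scope.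

Lemma near_lt_aux (R : realType) (u : nat -> R) (d e : R) :
  u @ \oo --> d -> 0 < e -> \forall t \near \oo, u t < d + e.
Proof.
move=> /cvgrPdist_lt H e0; apply: filterS (H e e0) => t.
by rewrite ltr_distl => /andP[h _]; rewrite -ltrBlDr.
Qed.

Theorem theorem42 (R : realType) (V : completeNormedModType R)
  (A B : set V) (phi : V -> R -> R) :
  A !=set0 -> B !=set0 ->
  phi_pos_valued A phi ->
  positive_property A phi ->
  unif_convex_about A phi ->
  BUC A B.
Proof.
move=> _ _ ppos pprop uc x z y [Mx hMx] [Mz hMz] Ax Az By cx cz.
set d := setdist A B.
have dlb : forall a b, A a -> B b -> d <= `|a - b|.
  move=> a b Aa Bb; apply: ge_inf; last by exists a => //; exists b.
  by exists 0 => _ [a' _ [b' _ <-]].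
apply/cvgrPdist_lt => eps eps0.
case: (ltP 0 d) => hd; last first.
  have e2 : 0 < eps / 2 by rewrite divr_gt0.
  near=> t.
  have h1 : `|x t - y t| < d + eps / 2 by near: t; exact: near_lt_aux.
  have h2 : `|z t - y t| < d + eps / 2 by near: t; exact: near_lt_aux.
  rewrite sub0r normrN normr_id.
  have -> : x t - z t = (x t - y t) - (z t - y t) by rewrite opprB addrA subrK.
  apply: le_lt_trans (ler_normB _ _) _.
  have -> : eps = eps / 2 + eps / 2 by rewrite -splitr.
  have := ltrD h1 h2; move=> h; apply: lt_le_trans h _.
  by rewrite lerD // gerDr.
case: (pselect (exists n, eps <= `|x n - z n|)) => [[n0 hn0] | hno]; last first.
  near=> t; rewrite sub0r normrN normr_id ltNge; apply/negP => h.
  by apply: hno; exists t.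
pose m := fun n => 2^-1 *: (x n + z n).
pose A' := [set m n | n in [set n | eps <= `|x n - z n|]].
have A'A : A' `<=` A.
  by move=> _ [n hn <-]; case: (uc eps eps0 (x n) (z n) (Ax n) (Az n) hn).
have A'n : A' !=set0 by exists (m n0); exists n0.
have A'b : Defs.bounded_set A'.
  exists (2^-1 * (Mx + Mz)) => _ [n _ <-].
  rewrite /m normrZ ger0_norm ?invr_ge0 ?ler0n //.
  apply: ler_wpM2l; first by rewrite invr_ge0 ler0n.
  by apply: le_trans (ler_normD _ _) _; apply: lerD.
have dpos := pprop A' A'A A'n A'b eps eps0.
set S := [set phi _ _ | _ in _ & _ in _] in dpos.
set del := inf S in dpos.
have hdel : forall n, eps <= `|x n - z n| -> del <= phi (m n) eps.
  move=> n hn; apply: ge_inf.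
    exists 0 => _ [a ha [e he <-]]; apply/ltW/ppos; first exact: A'A.
    exact: lt_le_trans eps0 he.
  by exists (m n); [exists n | exists eps; [rewrite /= lexx|]].
pose r := Num.min del d / 2.
have r0 : 0 < r by rewrite divr_gt0 // lt_min dpos hd.
have rmin : r < Num.min del d by rewrite /r ltr_pdivrMr // ltr_pMr ?ltr1n // lt_min dpos hd.
have rd : r < d by apply: lt_le_trans rmin _; rewrite ge_min lexx orbT.
have rdel : r < del by apply: lt_le_trans rmin _; rewrite ge_min lexx.
have r2 : 0 < r / 2 by rewrite divr_gt0.
near=> t.
have h1 : `|x t - y t| < d + r / 2 by near: t; exact: near_lt_aux.
have h2 : `|z t - y t| < d + r / 2 by near: t; exact: near_lt_aux.
rewrite sub0r normrN normr_id ltNge; apply/negP => ht.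
have [Amt ball] := uc eps eps0 _ _ (Ax t) (Az t) ht.
have hmy : `|m t - y t| < d + r / 2.
  have -> : m t - y t = 2^-1 *: ((x t - y t) + (z t - y t)).
    have e2 : (2^-1 + 2^-1 : R) = 1 by rewrite [RHS](splitr 1) mul1r.
    by rewrite /m !scalerDr !scalerN addrACA -opprD -scalerDl e2 scale1r.
  rewrite normrZ ger0_norm ?invr_ge0 ?ler0n //.
  apply: le_lt_trans (ler_wpM2l _ (ler_normD _ _)) _; first by rewrite invr_ge0 ler0n.
  rewrite mulrC -/(_ / 2) ltr_pdivrMr //.
  have -> : (d + r / 2) * 2 = (d + r / 2) + (d + r / 2) by rewrite mulrDr mulr1.
  exact: ltrD.
have hmy2 : d <= `|m t - y t| := dlb _ _ Amt (By t).
pose u := y t - m t.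
have nu : `|u| = `|m t - y t| by rewrite /u distrC.
have u0 : 0 < `|u| by rewrite nu; apply: lt_le_trans hd hmy2.
pose w := m t + (r / `|u|) *: u.
have ru : r / `|u| <= 1 by rewrite ler_pdivrMr // mul1r nu; apply: ltW; apply: lt_le_trans rd hmy2.
have Aw : A w.
  apply: ball; rewrite /oball /= /w addrAC subrr add0r normrZ.
  rewrite ger0_norm; last by rewrite divr_ge0 // ltW.
  have e : r / `|u| * `|u| = r by rewrite divfK ?gt_eqF.
  rewrite [X in X < _]e.
  apply: lt_le_trans rdel _; exact: hdel.
have := dlb _ _ Aw (By t).
have -> : w - y t = (1 - r / `|u|) *: (- u).
  rewrite scalerBl scale1r scalerN opprK /w /u opprB.
  by rewrite addrAC.
rewrite normrZ normrN ger0_norm ?subr_ge0 // mulrBl mul1r.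
have e : r / `|u| * `|u| = r by rewrite divfK ?gt_eqF.
rewrite [X in _ <= _ - X]e.
rewrite nu => hc.
have : d < d.
  apply: le_lt_trans hc _; rewrite ltrBlDr.
  apply: lt_le_trans hmy _; rewrite lerD2l.
  by rewrite ler_pdivrMr // ler_peMr ?(ltW r0) // ler1n.
by move=> h; have := lt_le_trans h (le_refl d); rewrite ltxx.
Unshelve. all: end_near.
Qed.
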